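(* Let $n,m\ge1$, $\vec v\in\hat N^n$, $\vec w\in\hat N^m$, and define $\vec v\nearrow\vec w=(v_1,\dots,v_n,\ n\triangleright w_1,\dots,n\triangleright w_m)$ and $\vec v\nwarrow\vec w=(v_1,\dots,v_n,\ w_1+n,\dots,w_m+n)$, where $n\triangleright a=a+n$ if $a\neq1$ and $n\triangleright 1=1$. Then: (i) $\vec v\nearrow\vec w,\ \vec v\nwarrow\vec w\in\hat N^{n+m}$, and for trees $\pi,\tau$ one has $\mathrm{name}(\pi\nearrow\tau)=\mathrm{name}(\pi)\nearrow\mathrm{name}(\tau)$ and $\mathrm{name}(\pi\nwarrow\tau)=\mathrm{name}(\pi)\nwarrow\mathrm{name}(\tau)$; (ii) both operations are associative on $\bigcup_{n\ge1}\hat N^n$ and satisfy $(\vec u\nearrow\vec v)\nwarrow\vec w=\vec u\nearrow(\vec v\nwarrow\vec w)$; hence, extended bilinearly, they make $\bigoplus_{n\ge1}K\hat N^n$ an associative $L$-algebra, and $\mathrm{name}$ (extended linearly) is an isomorphism of associative $L$-algebras from $\bigoplus_{n\ge1}KY_n$ (with the tree operations) onto it; (iii) $M(\vec v\nearrow\vec w)=M(\vec v)M(\vec w)$, and $M(\vec v\nwarrow\vec w)=(-1)^mM(\vec v)$ if $\vec w=(1,2,\dots,m)$, while $M(\vec v\nwarrow\vec w)=0$ otherwise.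
   Context: $K$ is a field of characteristic zero. $Y_n$ is the set of planar rooted binary trees with $n$ internal vertices ($n+1$ leaves) up to isotopy. For trees $\pi,\tau$ with at least one internal vertex, $\pi\nearrow\tau$ (''over'') is the tree $\tau$ with its leftmost leaf identified with the root of $\pi$, and $\pi\nwarrow\tau$ (''under'') is the tree $\pi$ with its rightmost leaf identified with the root of $\tau$. A complete expression in $x_1,\dots,x_{n+1}$ is a full binary parenthesization of $x_1\cdots x_{n+1}$ (every product of two factors, including the outermost, in parentheses); trees correspond bijectively to complete expressions via $|\mapsto x_1$, $\tau_1\vee\tau_2\mapsto(E_1E_2)$ with consecutive relabelling, $\tau_1\vee\tau_2$ being the tree with new root, left subtree $\tau_1$, right subtree $\tau_2$. The name of $\tau\in Y_n$ is the vector $\vec v\in\mathbb N^n$ with $v_i=i$ if at least one left parenthesis stands immediately left of $x_i$ in the complete expression; otherwise the rightmost of the right parentheses immediately following $x_i$ matches a left parenthesis in the run immediately preceding some $x_j$, and $v_i=j$. $\hat N^n$ is the set of names of trees of $Y_n$. An associative $L$-algebra is a vector space with two associative bilinear products $\nearrow,\nwarrow$ satisfying $(x\nearrow y)\nwarrow z=x\nearrow(y\nwarrow z)$. $M(\vec v)=\mu((1,\dots,1),\vec v)$ where $\mu$ is the Möbius function of $\hat N^n$ with the componentwise order ($\vec v\le\vec w$ iff $v_i\le w_i$ for all $i$). *)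

(* Defs.v *)
From HB Require Import structures.
From mathcomp Require Import all_boot all_order all_algebra.
From mathcomp Require Import boolp.
Set Implicit Arguments. Unset Strict Implicit. Unset Printing Implicit Defensive.
Import GRing.Theory Num.Theory.

Inductive tree : Type := Leaf | Node of tree & tree.
Definition tree_eq_dec (x y : tree) : {x = y} + {x <> y}.
Proof. decide equality. Defined.
HB.instance Definition _ := hasDecEq.Build tree (compareP tree_eq_dec).

(* number of internal vertices; Y_n = trees t with internal t = n *)
Fixpoint internal (t : tree) : nat :=
  match t with Leaf => 0 | Node l r => (internal l + internal r).+1 end.

Fixpoint tover (pi tau : tree) : tree :=
  match tau with Leaf => pi | Node l r => Node (tover pi l) r end.
Fixpoint tunder (pi tau : tree) : tree :=
  match pi with Leaf => tau | Node l r => Node l (tunder r tau) end.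

Inductive tok : Type := LP | RP | X of nat.
Definition tok_eq_dec (x y : tok) : {x = y} + {x <> y}.
Proof. decide equality; exact: eq_comparable. Defined.
HB.instance Definition _ := hasDecEq.Build tok (compareP tok_eq_dec).

Definition isX (t : tok) : bool := if t is X _ then true else false.
Definition labelX (t : tok) : nat := if t is X j then j else 0.

Fixpoint expr (t : tree) (k : nat) : seq tok :=
  match t with
  | Leaf => [:: X k.+1]
  | Node l r => LP :: expr l k ++ expr r (k + (internal l).+1) ++ [:: RP]
  end.
Definition cexpr (t : tree) : seq tok := expr t 0.

(* tokens at positions a..b (inclusive, 0-based) *)
Definition slice (s : seq tok) (a b : nat) : seq tok := take (b - a).+1 (drop a s).
Definition balanced (s : seq tok) : bool := count_mem LP s == count_mem RP s.
(* position of the left parenthesis matching the right parenthesis at position q *)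
Definition match_lp (s : seq tok) (q : nat) : nat :=
  \max_(p < q | (nth RP s p == LP) && balanced (slice s p q)) p.

Definition name_at (s : seq tok) (i : nat) : nat :=
  let p := index (X i) s in
  if (0 < p) && (nth RP s p.-1 == LP) then i else
  let r := find (fun t => t != RP) (drop p.+1 s) in
  let q := p + r in                 (* rightmost ')' of the run after x_i *)
  let pl := match_lp s q in         (* its matching '(' *)
  let s' := drop pl.+1 s in
  labelX (nth RP s' (find isX s')). (* the x_j that this run of '(' precedes *)

Definition name (t : tree) : seq nat :=
  [seq name_at (cexpr t) i | i <- iota 1 (internal t)].

Definition hatN (n : nat) (v : seq nat) : Prop := exists t, internal t = n /\ name t = v.
Definition hatNpos (v : seq nat) : Prop := exists n, 0 < n /\ hatN n v.

Definition tri (n a : nat) : nat := if a == 1 then 1 else a + n.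
Definition nover (v w : seq nat) : seq nat := v ++ [seq tri (size v) a | a <- w].
Definition nunder (v w : seq nat) : seq nat := v ++ [seq a + size v | a <- w].

Definition leqv (x y : seq nat) : bool := (size x == size y) && all2 leq x y.

(* all z with 1 <= z_i <= y_i: contains every element of \hat N^n below y *)
Fixpoint box (y : seq nat) : seq (seq nat) :=
  match y with
  | [::] => [:: [::]]
  | a :: y' => [seq b :: z | b <- iota 1 a, z <- box y']
  end.

(* mu(x,x) = 1, mu(x,y) = - sum_{x <= z < y, z in \hat N^n} mu(x,z), 0 otherwise;
   the fuel (sumn y).+1 bounds the length of every chain below y *)
Fixpoint mob_aux (f : nat) (x y : seq nat) : int :=
  match f with
  | 0 => 0%R
  | f'.+1 =>
      if x == y then 1%R
      else if leqv x y then
        (- \sum_(z <- box y | leqv x z && (z != y) && `[< hatN (size y) z >])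
             mob_aux f' x z)%R
      else 0%R
  end.
Definition mobius (x y : seq nat) : int := mob_aux (sumn y).+1 x y.
Definition M (v : seq nat) : int := mobius (nseq (size v) 1) v.

(* an element of K B is a finite formal sum sum_k c_k b_k, given as a list of
   pairs (b_k, c_k); two formal sums are the same vector iff coefs agree *)
Definition coef (T : eqType) (K : fieldType) (c : seq (T * K)) (x : T) : K :=
  (\sum_(p <- c | p.1 == x) p.2)%R.
Definition bilin (T : eqType) (K : fieldType) (op : T -> T -> T)
  (a b : seq (T * K)) : seq (T * K) :=
  [seq (op p.1 q.1, (p.2 * q.2)%R) | p <- a, q <- b].
Definition linmap (T U : eqType) (K : fieldType) (f : T -> U) (a : seq (T * K))
  : seq (U * K) := [seq (f p.1, p.2) | p <- a].

(* Main.v *)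
Require Import Defs.
From HB Require Import structures.
From mathcomp Require Import all_boot all_order all_algebra.
Import GRing.Theory Num.Theory.
From mathcomp Require Import zify boolp.
Set Implicit Arguments. Unset Strict Implicit. Unset Printing Implicit Defensive.

Lemma expr_labels t k x : X x \in expr t k -> k < x <= k + (internal t).+1.
Proof.
elim: t k => [|l IHl r IHr] k /=.
  by rewrite inE => /eqP [->]; lia.
rewrite inE /= mem_cat mem_cat inE /= => /orP[/IHl|/orP[/IHr|//]]; lia.
Qed.

Lemma size_expr_pos t k : 0 < size (expr t k).
Proof. by case: t. Qed.

Lemma head_expr t k : nth LP (expr t k) 0 != RP.
Proof. by case: t. Qed.

Lemma firstX t k z : nth RP (expr t k ++ z) (find isX (expr t k ++ z)) = X k.+1.
Proof.
elim: t k z => [|l IHl r IHr] k z //=.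
rewrite -catA IHl //.
Qed.

Lemma expr_bal t k : count_mem LP (expr t k) = count_mem RP (expr t k).
Proof.
elim: t k => [|l IHl r IHr] k //=.
rewrite !count_cat /= IHl IHr; set a := count _ (expr l k); set b := count _ (expr r _).
simpl; lia.
Qed.

Definition weakd (e : seq tok) := forall n, count_mem RP (take n e) <= count_mem LP (take n e).

Lemma weakd_cat e1 e2 : weakd e1 -> count_mem LP e1 = count_mem RP e1 -> weakd e2 ->
  weakd (e1 ++ e2).
Proof.
move=> w1 b1 w2 n; rewrite take_cat; case: ifP => _; first exact: w1.
rewrite !count_cat b1 leq_add2l; exact: w2.
Qed.

Lemma weak_of_strict e : (forall n, 0 < n < size e ->
  count_mem RP (take n e) < count_mem LP (take n e)) ->
  count_mem LP e = count_mem RP e -> weakd e.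
Proof.
move=> S B n; case: (posnP n) => [->|n0]; first by rewrite take0.
case: (ltnP n (size e)) => hn; first by apply: ltnW; apply: S; rewrite n0.
by rewrite take_oversize // B.
Qed.

Lemma expr_dyck t k n : 0 < n < size (expr t k) ->
  count_mem RP (take n (expr t k)) < count_mem LP (take n (expr t k)).
Proof.
elim: t k n => [|l IHl r IHr] k n /=; first by lia.
case: n => [//|n] /andP[_ hn] /=.
rewrite catA takel_cat; last first. by move: hn; rewrite !size_cat /=; lia.
rewrite add0n add1n ltnS.
apply: weakd_cat; [exact: weak_of_strict (IHl k) (expr_bal l k)| exact: expr_bal
  | exact: weak_of_strict (IHr _) (expr_bal r _)].
Qed.

Lemma expr_suffix t k i : 0 < i < size (expr t k) ->
  ~~ balanced (drop i (expr t k)).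
Proof.
move=> hi; have := expr_dyck hi; have := expr_bal t k.
have H1 := count_cat (pred1 LP) (take i (expr t k)) (drop i (expr t k)).
have H2 := count_cat (pred1 RP) (take i (expr t k)) (drop i (expr t k)).
rewrite cat_take_drop in H1 H2.
rewrite /balanced H1 H2.
set a := count _ (take _ _); set b := count _ (take _ _); set c := count _ (drop _ _);
  set d := count _ (drop _ _).
move=> E L; apply/eqP; lia.
Qed.

Lemma expr_rcons t k : exists e0 c, expr t k = rcons e0 c /\ c != LP.
Proof.
case: t => [|l r] /=; first by exists [::], (X k.+1).
by exists (LP :: expr l k ++ expr r (k + (internal l).+1)), RP; rewrite -cats1 /= -!catA.
Qed.

Lemma rcons_nseq n (x : tok) : rcons (nseq n x) x = nseq n.+1 x.
Proof. by elim: n => //= n ->. Qed.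

Lemma expr_last t k : exists body d,
  expr t k = body ++ X (k + internal t).+1 :: nseq d RP /\
  (forall x, X x \in body -> x <= k + internal t) /\
  (0 < internal t -> 0 < d /\ exists b0 c, body = rcons b0 c /\ c != LP).
Proof.
elim: t k => [|l IHl r IHr] k /=.
  by exists [::], 0; rewrite addn0.
have {IHr} [br [dr [Er [Lr Pr]]]] := IHr (k + (internal l).+1).
exists (LP :: expr l k ++ br), dr.+1; split; last split.
- rewrite Er -!catA /= cats1 rcons_nseq /=.
  rewrite -catA; congr (_ :: _ ++ _ ++ X _.+1 :: _); lia.
- move=> x; rewrite inE /= mem_cat => /orP[/expr_labels|/Lr]; lia.
- move=> _; split=> //.
  case: r Er Lr Pr => [|rl rr] Er Lr Pr.
    have Hb : br = [::].
      have : size (expr Leaf (k + (internal l).+1)) = 1 by [].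
      rewrite Er size_cat /=; by case: br {Er Lr Pr} => //= a s; rewrite addnS.
    have [e0 [c [Ee Hc]]] := expr_rcons l k.
    by exists (LP :: e0), c; rewrite Hb Ee cats0.
  have [_ [b0 [c [Eb Hc]]]] := Pr isT.
  by exists (LP :: expr l k ++ b0), c; rewrite Eb -rcons_cat.
Qed.

Lemma match_lp_eq s q p0 : p0 < q -> nth RP s p0 = LP -> balanced (slice s p0 q) ->
  (forall p, p0 < p < q -> nth RP s p = LP -> ~~ balanced (slice s p q)) ->
  match_lp s q = p0.
Proof.
move=> hq hp hb hn; apply/eqP; rewrite eqn_leq; apply/andP; split.
  apply/bigmax_leqP => i /andP[/eqP hi hbi].
  rewrite leqNgt; apply/negP => lt; have := hn i; rewrite lt ltn_ord hi hbi.
  by move/(_ isT erefl).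
have := @leq_bigmax_cond _ (fun p : 'I_q => (nth RP s p == LP) && balanced (slice s p q))
   (fun p => nat_of_ord p) (Ordinal hq).
by rewrite /= hp eqxx hb; apply.
Qed.

Lemma nth_size_cat (P x : seq tok) j : nth RP (P ++ x) (size P + j) = nth RP x j.
Proof. by rewrite nth_cat ltnNge leq_addr /= addKn. Qed.

Lemma drop_size_cat' (P x : seq tok) j : drop (size P + j) (P ++ x) = drop j x.
Proof. by rewrite addnC -drop_drop drop_size_cat. Qed.

Lemma core l k pre rest : (forall x, X x \in pre -> x <= k) -> nth LP rest 0 != RP ->
  name_at (pre ++ LP :: expr l k ++ rest) (k + internal l).+1 = k.+1.
Proof.
move=> Hpre Hrest.
have npre : forall x, k < x -> X x \notin pre.
  by move=> x hx; apply/negP => /Hpre; rewrite leqNgt hx.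
case: l => [|ll lr].
  rewrite /name_at /= addn0 index_cat (negbTE (npre _ (ltnSn k))) /= eqxx /= addn1 /=.
  by rewrite nth_cat ltnn subnn /=.
set l := Node ll lr.
have [body [d [El [Lb Pb]]]] := expr_last l k.
have [dp [b0 [c [Eb Hc]]]] := Pb isT.
set i := (k + internal l).+1.
set P := rcons pre LP.
have Es : pre ++ LP :: expr l k ++ rest = P ++ expr l k ++ rest by rewrite /P -cats1 -catA.
rewrite Es.
have Hidx : index (X i) (P ++ expr l k ++ rest) = size P + (size b0).+1.
  rewrite index_cat.
  have -> : (X i \in P) = false.
    by rewrite /P mem_rcons inE /= (negbTE (npre _ _)) // /i; lia.
  rewrite El Eb -catA index_cat.
  have -> : (X i \in rcons b0 c) = false.
    by apply/negP; rewrite -Eb => /Lb; rewrite /i; lia.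
  by rewrite /= eqxx addn0 !size_rcons.
set e := expr l k.
have Ee : e ++ rest = b0 ++ c :: X i :: nseq d RP ++ rest by rewrite /e El Eb cat_rcons -catA.
have Hse : size e = size b0 + 2 + d by rewrite /e El Eb size_cat size_rcons /= size_nseq; lia.
rewrite /name_at Hidx.
have -> : 0 < size P + (size b0).+1 by rewrite addnS.
have -> : (size P + (size b0).+1).-1 = size P + size b0 by rewrite addnS.
rewrite andTb nth_size_cat Ee -(addn0 (size b0)) nth_size_cat (negbTE Hc) -addnS.
rewrite -Ee.
have -> : drop (size P + (size b0 + 1)).+1 (P ++ e ++ rest) = nseq d RP ++ rest.
  by rewrite -addnS drop_size_cat' Ee -addnS drop_size_cat' !drop_cons drop0.
have -> : find (fun t => t != RP) (nseq d RP ++ rest) = d.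
  rewrite find_cat.
  have -> : has (fun t => t != RP) (nseq d RP) = false by elim: (d) => //= n ->; rewrite eqxx.
  by rewrite size_nseq; case: (rest) Hrest => [|t rr] /=; [|move=> /negbTE ->]; rewrite addn0.
have -> : match_lp (P ++ e ++ rest) (size P + (size b0 + 1) + d) = size P.
  apply: match_lp_eq.
  - lia.
  - by rewrite -(addn0 (size P)) nth_size_cat.
  - rewrite /slice drop_size_cat //.
    have -> : (size P + (size b0 + 1) + d - size P).+1 = size e by lia.
    by rewrite take_size_cat // /balanced expr_bal.
  - move=> p /andP[h1 h2] _.
    have -> : p = size P + (p - size P) by lia.
    rewrite /slice drop_size_cat' drop_cat.
    have hj : p - size P < size e by lia.
    rewrite hj take_size_cat; last by rewrite size_drop; lia.
    apply: expr_suffix; rewrite -/e; lia.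
rewrite -addn1 drop_size_cat' /e /l /= -!catA drop0 firstX //.
Qed.

Fixpoint nm (t : tree) : seq nat :=
  match t with Leaf => [::] | Node l r => nm l ++ 1 :: map (addn (internal l).+1) (nm r) end.

Lemma size_nm t : size (nm t) = internal t.
Proof. by elim: t => //= l IHl r IHr; rewrite size_cat /= size_map IHl IHr addnS. Qed.

Lemma name_at_ctx t : forall k pre post j, (forall x, X x \in pre -> x <= k) ->
  0 < j <= internal t -> name_at (pre ++ expr t k ++ post) (k + j) = k + nth 0 (nm t) j.-1.
Proof.
elim: t => [|l IHl r IHr] k pre post j Hpre /andP[j0 hj] /=; first by case: j j0 hj.
move: hj => /= hj.
have Hs : pre ++ (LP :: expr l k ++ expr r (k + (internal l).+1) ++ [:: RP]) ++ post
   = pre ++ LP :: expr l k ++ (expr r (k + (internal l).+1) ++ RP :: post).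
  by rewrite /= -!catA.
rewrite Hs.
case: (ltngtP j (internal l).+1) => hja.
- have -> : pre ++ LP :: expr l k ++ (expr r (k + (internal l).+1) ++ RP :: post)
     = rcons pre LP ++ expr l k ++ (expr r (k + (internal l).+1) ++ RP :: post)
    by rewrite -cats1 -catA.
  rewrite IHl; last by rewrite j0 /=; lia.
  - by rewrite nth_cat size_nm; have -> : j.-1 < internal l by lia.
  - by move=> x; rewrite mem_rcons inE /= => /Hpre.
- have -> : pre ++ LP :: expr l k ++ (expr r (k + (internal l).+1) ++ RP :: post)
     = (pre ++ LP :: expr l k) ++ expr r (k + (internal l).+1) ++ RP :: post
    by rewrite -catA.
  have -> : k + j = (k + (internal l).+1) + (j - (internal l).+1) by lia.
  rewrite IHr; last by lia.
  - rewrite nth_cat size_nm.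
    have -> : j.-1 < internal l = false by lia.
    have -> : j.-1 - internal l = (j - (internal l).+1).-1.+1 by lia.
    rewrite /= (nth_map 0); first by lia.
    rewrite size_nm; lia.
  - move=> x; rewrite mem_cat inE /= => /orP[/Hpre|/expr_labels]; lia.
- subst j; rewrite addnS core //.
  + by rewrite nth_cat size_nm ltnn subnn /= addn1.
  + by rewrite nth_cat size_expr_pos head_expr.
Qed.

Lemma name_nm t : name t = nm t.
Proof.
rewrite /name /cexpr.
transitivity [seq nth 0 (nm t) i.-1 | i <- iota 1 (internal t)].
  apply/eq_in_map => i; rewrite mem_iota => hi.
  have := @name_at_ctx t 0 [::] [::] i (fun x (hx : X x \in [::]) => ltac:(done)).
  rewrite cats0 /= add0n; apply; lia.
rewrite -[1]addn0 iotaDl -map_comp.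
rewrite -{2}(mkseq_nth 0 (nm t)) size_nm.
by apply: eq_map => i /=.
Qed.

Lemma pos_nm t : all (fun x => 0 < x) (nm t).
Proof.
elim: t => //= l IHl r IHr; rewrite all_cat IHl /= all_map.
by apply/allP => x _ /=; rewrite addSn.
Qed.

Lemma pos_nmP t x : x \in nm t -> 0 < x.
Proof. by move/(allP (pos_nm t)). Qed.

Lemma internal_tover pi tau : internal (tover pi tau) = internal pi + internal tau.
Proof. by elim: tau => //= [|l IHl r _]; [rewrite addn0 | rewrite IHl addnS addnA]. Qed.

Lemma internal_tunder pi tau : internal (tunder pi tau) = internal pi + internal tau.
Proof. by elim: pi => //= l _ r IHr; rewrite IHr addSn addnA. Qed.

Lemma nm_tunder pi tau : nm (tunder pi tau) = nunder (nm pi) (nm tau).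
Proof.
rewrite /nunder; elim: pi => /= [|l _ r IHr].
  by elim: (nm tau) => //= x s <-; rewrite addn0.
rewrite IHr map_cat -catA /= -map_comp size_cat /= size_map.
congr (_ ++ _ :: _ ++ _); apply: eq_map => x /=; rewrite !size_nm; clear; lia.
Qed.

Lemma nm_tover pi tau : nm (tover pi tau) = nover (nm pi) (nm tau).
Proof.
rewrite /nover; elim: tau => /= [|l IHl r _]; first by rewrite cats0.
rewrite IHl map_cat -catA /= -map_comp internal_tover size_nm.
congr (_ ++ _ ++ _ :: _); apply/eq_in_map => x /pos_nmP hx /=; rewrite /tri.
have -> : ((internal l).+1 + x == 1) = false by apply/negbTE; clear -hx; lia.
clear -hx; lia.
Qed.

Lemma hatN_nm n v : hatN n v <-> exists t, internal t = n /\ nm t = v.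
Proof. by split=> [[t [h1 h2]]|[t [h1 h2]]]; exists t; rewrite ?name_nm in h2 *. Qed.

Lemma nm_inj : injective nm.
Proof.
elim=> [|l IHl r IHr] [|l' r'] //=.
- by case: (nm l').
- by case: (nm l).
move=> E.
have key : forall l r, index 1 (rev (nm (Node l r))) = internal r.
  move=> l0 r0 /=; rewrite rev_cat rev_cons index_cat.
  rewrite mem_rcons inE eqxx /= -cats1 index_cat.
  have -> : (1 \in rev [seq (internal l0).+1 + i | i <- nm r0]) = false.
    rewrite mem_rev; apply/negbTE/mapP => [[x /pos_nmP hp hx]]; have h : (1 = (internal l0).+1 + x)%N := hx; clear -h hp; lia.
  by rewrite size_rev size_map size_nm /= addn0.
have Er : internal r = internal r' by rewrite -(key l r) -(key l' r') /= E.
have El : internal l = internal l'.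
  have := congr1 size E; rewrite !size_cat /= !size_map !size_nm Er; lia.
move/eqP: E; rewrite eqseq_cat ?size_nm // => /andP[/eqP/IHl -> /=].
rewrite eqseq_cons eqxx /= => /eqP/(inj_map (@addnI (internal l').+1))/IHr ->.
by [].
Qed.

Lemma nm_head t : 0 < internal t -> nth 0 (nm t) 0 = 1.
Proof.
elim: t => //= l IHl r _ _; rewrite nth_cat size_nm.
by case: ifP => [h|_]; [exact: IHl | rewrite sub0n].
Qed.

Local Open Scope ring_scope.

Definition gg (j a : nat) : int := if a == 1%N then 1 else if a == j then -1 else 0.
Fixpoint fk (k : nat) (y : seq nat) : int :=
  match y with [::] => 1 | a :: y' => gg k.+1 a * fk k.+1 y' end.
Fixpoint prodk (k : nat) (y : seq nat) : int :=
  match y with [::] => 1 | a :: y' => (\sum_(b <- iota 1 a) gg k.+1 b) * prodk k.+1 y' end.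

Lemma fk_cat k v w : fk k (v ++ w) = fk k v * fk (k + size v) w.
Proof.
elim: v k => /= [|a v IH] k; first by rewrite mul1r addn0.
by rewrite IH mulrA addnS.
Qed.

Lemma fk_ones k n : fk k (nseq n 1%N) = 1.
Proof. by elim: n k => //= n IH k; rewrite IH /gg eqxx mulr1. Qed.

Lemma mem_box y z : (z \in box y) = all2 (fun a b => (0 < a)%N && (a <= b)%N) z y.
Proof.
elim: y z => [|a y IH] [|b z] //=.
- apply/allpairsPdep => [[x [w [_ _ //]]]].
- apply/allpairsPdep/idP => [[x [w [hx hw [-> ->]]]]|/andP[hb hz]].
    by rewrite -IH hw andbT -mem_iota.
  by exists b, z; split=> //; [rewrite mem_iota; lia | rewrite IH].
Qed.

Lemma uniq_box y : uniq (box y).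
Proof.
elim: y => //= a y IH; apply: allpairs_uniq_dep => //; first exact: iota_uniq.
by move=> [x1 z1] [x2 z2] _ _ /= [-> ->].
Qed.

Lemma sum_box k y : \sum_(z <- box y) fk k z = prodk k y.
Proof.
elim: y k => /= [|a y IH] k; first by rewrite big_seq1.
rewrite big_allpairs_dep /= mulr_suml; apply: eq_bigr => b _.
by rewrite -IH mulr_sumr.
Qed.

Lemma sum_g j : (1 < j)%N -> \sum_(b <- iota 1 j) gg j b = 0.
Proof.
case: j => [|[|j]] // _.
rewrite (iotaD 1 1 j.+1) big_cat big_seq1 -[j.+1]addn1 (iotaD (1+1) j 1) big_cat big_seq1.
rewrite big1_seq; last first.
  move=> b /andP[_]; rewrite mem_iota => hb; rewrite /gg.
  have -> : (b == 1%N) = false by apply/negbTE; lia.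
  have -> : (b == (j + 1).+1) = false by apply/negbTE; lia.
  by [].
rewrite /gg eqxx /= add0r.

have -> : (1 + 1 + j == (j + 1).+1)%N by apply/eqP; lia.
by rewrite addrN.
Qed.

Lemma prodk0 k y i : (i < size y)%N -> (0 < k + i)%N -> nth 0%N y i = (k + i).+1 ->
  prodk k y = 0.
Proof.
elim: y k i => //= a y IH k [|i] hi hk ha.
  by move: ha hk; rewrite /= addn0 => -> hk; rewrite sum_g ?mul0r //; lia.
by rewrite (IH k.+1 i) ?mulr0 // addSnnS.
Qed.

Lemma nm_notones t : nm t != nseq (internal t) 1%N ->
  exists2 i, (0 < i < internal t)%N & nth 0%N (nm t) i = i.+1.
Proof.
elim: t => [|l IHl r IHr] //.
case: r IHr => [|rl rr] _.
  have -> : nm (Node l Leaf) = nm l ++ [:: 1%N] by [].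
  have -> : internal (Node l Leaf) = (internal l + 1)%N by rewrite /= addn0 addn1.
  rewrite nseqD => H.
  have : nm l != nseq (internal l) 1%N.
    by apply: contra H => /eqP ->.
  move/IHl => [i hi hn]; exists i; first by lia.
  by rewrite nth_cat size_nm; have -> : (i < internal l)%N by lia.
move=> _; exists (internal l).+1; first by rewrite /=; lia.
rewrite [nm (Node l _)]/= nth_cat size_nm ltnNge leqnSn /= subSn // subnn [nth _ _ 1]/=.
rewrite -[nm rl ++ _]/(nm (Node rl rr)) (nth_map 0%N); last by rewrite size_nm.
by rewrite (@nm_head (Node rl rr)) // addn1.
Qed.

Definition t1 := Node Leaf Leaf.

Lemma fk_tree z : fk 0 z != 0 -> exists t, internal t = size z /\ nm t = z.
Proof.
elim/last_ind: z => [|z c IH]; first by exists Leaf.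
rewrite -cats1 fk_cat add0n /= mulr1 mulf_eq0 negb_or => /andP[/IH [t [ht hn]] hc].
move: hc; rewrite /gg; case: ifP => [/eqP ->|_] hc.
  exists (tover t t1); rewrite internal_tover nm_tover hn ht /nover size_cat addn1.
  by split.
move: hc; case: ifP => [/eqP -> _|]; last by rewrite eqxx.
exists (tunder t t1); rewrite internal_tunder nm_tunder hn ht /nunder size_cat addn1.
by split => //=; rewrite add1n.
Qed.

Lemma box_props z y : z \in box y ->
  [/\ size z = size y, all (fun x => 0 < x)%N z, (sumn z <= sumn y)%N
     & (z != y -> sumn z < sumn y)%N].
Proof.
rewrite mem_box; elim: z y => [|a z IH] [|b y] //= /andP[/andP[ha hab] /IH [h1 h2 h4 h3]].
split; [by rewrite h1 | by rewrite ha h2 | by apply: leq_add |].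
rewrite eqseq_cons negb_and => /orP[hne|hne].
  move: hne hab h4; clear; lia.
have := h3 hne; move: hab; clear; lia.
Qed.

Lemma box_self y : all (fun x => 0 < x)%N y -> y \in box y.
Proof.
rewrite mem_box; elim: y => //= a y IH /andP[ha hy]; by rewrite ha leqnn IH.
Qed.

Lemma leqv_ones y : all (fun x => 0 < x)%N y -> leqv (nseq (size y) 1%N) y.
Proof.
rewrite /leqv size_nseq eqxx /=; elim: y => //= a y IH /andP[ha hy]; by rewrite ha IH.
Qed.

Lemma hatN_of_tree t : hatN (internal t) (nm t).
Proof. by apply/hatN_nm; exists t. Qed.

Lemma mob_aux_f kf y : (exists t, nm t = y) -> (sumn y < kf)%N ->
  mob_aux kf (nseq (size y) 1%N) y = fk 0 y.
Proof.
elim: kf y => // kf IH y [t ht] hk.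
have posy : all (fun x => 0 < x)%N y by rewrite -ht pos_nm.
have hy : hatN (size y) y by rewrite -ht size_nm; apply: hatN_of_tree.
rewrite /=; case: eqP => [E|NE].
  by rewrite -E fk_ones.
rewrite leqv_ones //.
set C := fun z => `[< hatN (size y) z >].
have step1 : \sum_(z <- box y | leqv (nseq (size y) 1%N) z && (z != y) && `[< hatN (size y) z >])
     mob_aux kf (nseq (size y) 1%N) z = \sum_(z <- box y | C z && (z != y)) fk 0 z.
  rewrite big_seq_cond [RHS]big_seq_cond; apply: eq_big => [z|z].
    case hz: (z \in box y) => //=; have [h1 h2 _ _] := box_props hz.
    rewrite (_ : leqv _ z = true); last by rewrite -h1 leqv_ones.
    by rewrite /C andbC.
  move=> /andP[hz /andP[/andP[_ hne] hC]].
  have [h1 h2 _ h4] := box_props hz.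
  rewrite -h1 IH //; last by have := h4 hne; lia.
  move/asboolP: hC => /hatN_nm [t' [_ ht']]; by exists t'.
rewrite step1.
have step2 : \sum_(z <- box y | C z) fk 0 z = 0.
  have : nm t != nseq (internal t) 1%N.
    by apply/eqP; rewrite ht -(size_nm t) ht => E; apply: NE.
  move/nm_notones => [i hi hn].
  have hi' : (i < size y)%N by rewrite -ht size_nm; lia.
  rewrite big_mkcond /= -[RHS](prodk0 (k:=0) hi'); first last.
  - by rewrite -ht hn.
  - by lia.
  rewrite -sum_box; apply: eq_big_seq => z hz.
  case: ifP => // /negP hC; apply/eqP; apply: contraT => hf.
  have hf' : fk 0 z != 0 by rewrite eq_sym.
  have [t' [h1 h2]] := fk_tree hf'.
  have [hs _ _ _] := box_props hz.
  by exfalso; apply: hC; rewrite /C; apply/asboolP/hatN_nm; exists t'; rewrite h1 hs.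
move: step2; rewrite big_mkcond (bigD1_seq y) ?box_self ?uniq_box //=.
have -> : C y by apply/asboolP.
rewrite big_mkcondl => /eqP; rewrite addr_eq0 => /eqP ->.
by [].
Qed.

Lemma M_f y : (exists t, nm t = y) -> M y = fk 0 y.
Proof. by move=> h; rewrite /M /mobius; apply: mob_aux_f. Qed.

Lemma fk_tri n k w : all (fun x => 0 < x)%N w -> fk (n + k) (map (tri n) w) = fk k w.
Proof.
elim: w k => //= a w IH k /andP[ha hw]; rewrite -addnS IH //; congr (_ * _).
rewrite /gg /tri; case: a ha {IH} => [|[|a]] // _.
have -> : (a.+2 + n == 1)%N = false by apply/negbTE; lia.
have -> : (a.+2 + n == (n + k.+1))%N = (a.+2 == k.+1) by apply/eqP/eqP; lia.
by [].
Qed.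

Lemma fk_shift n k w : (0 < n)%N -> all (fun x => 0 < x)%N w ->
  fk (n + k) (map (fun a => a + n)%N w) = if w == iota k.+1 (size w) then (-1) ^+ (size w) else 0.
Proof.
move=> hn; elim: w k => //= a w IH k /andP[ha hw]; rewrite -addnS IH // eqseq_cons.
rewrite /gg.
have -> : (a + n == 1)%N = false by apply/negbTE; lia.
have -> : (a + n == (n + k.+1))%N = (a == k.+1) by apply/eqP/eqP; lia.
case: (a == k.+1) => /=; last by rewrite mul0r.
by case: ifP => _; rewrite ?mulr0 // exprS.
Qed.

Local Open Scope ring_scope.

Section Coef.
Variables (T U : eqType) (K : fieldType).

Lemma coefLE (c : seq (T * K)) x : coef c x = \sum_(p <- c) p.2 * (p.1 == x)%:R.
Proof.
rewrite /coef big_mkcond; apply: eq_bigr => p _.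
by case: (p.1 == x); rewrite ?mulr1 ?mulr0.
Qed.

Lemma pair_sum (c : seq (T * K)) (s : seq T) (g : T -> K) : uniq s ->
  {subset map fst c <= s} -> \sum_(p <- c) p.2 * g p.1 = \sum_(x <- s) coef c x * g x.
Proof.
move=> us sub.
under [RHS]eq_bigr do rewrite coefLE mulr_suml.
rewrite exchange_big /=; apply: eq_big_seq => p hp.
have hs : p.1 \in s by apply: sub; apply: map_f.
rewrite (bigD1_seq p.1) //= eqxx mulr1 big1 ?addr0 // => x /negbTE hx.
by rewrite eq_sym hx mulr0 mul0r.
Qed.

Lemma coef_pair (c c' : seq (T * K)) (g : T -> K) : coef c =1 coef c' ->
  \sum_(p <- c) p.2 * g p.1 = \sum_(p <- c') p.2 * g p.1.
Proof.
move=> E.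
rewrite (@pair_sum c (undup (map fst (c ++ c')))); first last.
- by move=> x hx; rewrite mem_undup map_cat mem_cat hx.
- exact: undup_uniq.
rewrite (@pair_sum c' (undup (map fst (c ++ c')))); first last.
- by move=> x hx; rewrite mem_undup map_cat mem_cat hx orbT.
- exact: undup_uniq.
by apply: eq_bigr => x _; rewrite E.
Qed.

Lemma sum_bilin (op : T -> T -> T) (a b : seq (T * K)) (F : T * K -> K) :
  \sum_(r <- bilin op a b) F r = \sum_(p <- a) \sum_(q <- b) F (op p.1 q.1, p.2 * q.2).
Proof. exact: big_allpairs_dep. Qed.

Lemma sum_linmap (f : T -> U) (a : seq (T * K)) (F : U * K -> K) :
  \sum_(r <- linmap f a) F r = \sum_(p <- a) F (f p.1, p.2).
Proof. by rewrite big_map. Qed.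

Lemma coef_bilinE (op : T -> T -> T) (a b : seq (T * K)) x :
  coef (bilin op a b) x = \sum_(p <- a) p.2 * \sum_(q <- b) q.2 * (op p.1 q.1 == x)%:R.
Proof.
rewrite coefLE sum_bilin; apply: eq_bigr => p _; rewrite mulr_sumr.
by apply: eq_bigr => q _ /=; rewrite mulrA.
Qed.

Lemma coef_bilin_wd (op : T -> T -> T) (a a' b b' : seq (T * K)) :
  coef a =1 coef a' -> coef b =1 coef b' -> coef (bilin op a b) =1 coef (bilin op a' b').
Proof.
move=> Ea Eb x; rewrite !coef_bilinE.
under eq_bigr do rewrite (coef_pair (fun y => (op _ y == x)%:R) Eb).
exact: (coef_pair (fun z => \sum_(q <- b') q.2 * (op z q.1 == x)%:R) Ea).
Qed.

Lemma coef_assoc (op1 op2 op3 op4 : T -> T -> T) (a b c : seq (T * K)) :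
  (forall p q w, p \in a -> q \in b -> w \in c ->
     op1 (op2 p.1 q.1) w.1 = op3 p.1 (op4 q.1 w.1)) ->
  coef (bilin op1 (bilin op2 a b) c) =1 coef (bilin op3 a (bilin op4 b c)).
Proof.
move=> H x; rewrite !coefLE !sum_bilin.
apply: eq_big_seq => p hp; rewrite sum_bilin.
apply: eq_big_seq => q hq; apply: eq_big_seq => w hw /=.
by rewrite H // mulrA.
Qed.

End Coef.

Close Scope ring_scope.

Lemma hatNpos_props u : hatNpos u -> all (fun x => 0 < x) u /\ 0 < size u.
Proof.
by move=> [n [hn /hatN_nm [t [ht <-]]]]; rewrite pos_nm size_nm ht.
Qed.

Lemma hatNpos_tree u : hatNpos u <-> exists t, 0 < internal t /\ nm t = u.
Proof.
split=> [[n [hn /hatN_nm [t [ht hu]]]]|[t [ht hu]]].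
  by exists t; rewrite ht.
by exists (internal t); split=> //; apply/hatN_nm; exists t.
Qed.

Lemma nover_assoc u v w : all (fun x => 0 < x) w ->
  nover (nover u v) w = nover u (nover v w).
Proof.
move=> hw; rewrite /nover map_cat -catA -map_comp size_cat size_map.
congr (_ ++ _ ++ _); apply/eq_in_map => a /(allP hw) ha /=; rewrite /tri.
case: (a =P 1) => [//|/eqP h1].
have -> : (a + size v == 1) = false by apply/negbTE; lia.
lia.
Qed.

Lemma nunder_assoc u v w : nunder (nunder u v) w = nunder u (nunder v w).
Proof.
rewrite /nunder map_cat -catA -map_comp size_cat size_map.
by congr (_ ++ _ ++ _); apply/eq_map => a /=; lia.
Qed.

Lemma mixed_assoc u v w : all (fun x => 0 < x) w -> 0 < size v ->
  nunder (nover u v) w = nover u (nunder v w).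
Proof.
move=> hw hv; rewrite /nover /nunder map_cat -catA -map_comp size_cat size_map.
congr (_ ++ _ ++ _); apply/eq_in_map => a /(allP hw) ha /=; rewrite /tri.
have -> : (a + size v == 1) = false by apply/negbTE; lia.
lia.
Qed.

Lemma hatNpos_nover u v : hatNpos u -> hatNpos v -> hatNpos (nover u v).
Proof.
move=> /hatNpos_tree [t [ht <-]] /hatNpos_tree [s [hs <-]]; apply/hatNpos_tree.
by exists (tover t s); rewrite internal_tover nm_tover; split=> //; lia.
Qed.

Lemma hatNpos_nunder u v : hatNpos u -> hatNpos v -> hatNpos (nunder u v).
Proof.
move=> /hatNpos_tree [t [ht <-]] /hatNpos_tree [s [hs <-]]; apply/hatNpos_tree.
by exists (tunder t s); rewrite internal_tunder nm_tunder; split=> //; lia.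
Qed.

Unset Implicit Arguments.
Theorem mainTheorem6 (K : fieldType) (HK : [pchar K]%R =i pred0) :
  (* (i) and (iii) *)
  (forall (n m : nat) (v w : seq nat), 0 < n -> 0 < m -> hatN n v -> hatN m w ->
     [/\ hatN (n + m) (nover v w), hatN (n + m) (nunder v w),
         M (nover v w) = (M v * M w)%R
       & M (nunder v w) = (if w == iota 1 m then ((-1) ^+ m * M v)%R else 0%R)])
  /\
  (* (i), trees *)
  (forall pi tau : tree, 0 < internal pi -> 0 < internal tau ->
     name (tover pi tau) = nover (name pi) (name tau)
     /\ name (tunder pi tau) = nunder (name pi) (name tau))
  /\
  (* (ii), on the basis *)
  (forall u v w : seq nat, hatNpos u -> hatNpos v -> hatNpos w ->
     [/\ nover (nover u v) w = nover u (nover v w),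
         nunder (nunder u v) w = nunder u (nunder v w)
       & nunder (nover u v) w = nover u (nunder v w)])
  /\
  (* (ii), the bilinear extension is a well-defined associative L-algebra
     on (+)_{n>=1} K \hat N^n *)
  (forall a a' b b' c : seq (seq nat * K),
     (forall p, p \in a -> hatNpos p.1) -> (forall p, p \in a' -> hatNpos p.1) ->
     (forall p, p \in b -> hatNpos p.1) -> (forall p, p \in b' -> hatNpos p.1) ->
     (forall p, p \in c -> hatNpos p.1) ->
     ((forall p, p \in bilin nover a b -> hatNpos p.1)
      /\ (forall p, p \in bilin nunder a b -> hatNpos p.1)) /\
     [/\ (coef a =1 coef a' -> coef b =1 coef b' ->
            coef (bilin nover a b) =1 coef (bilin nover a' b')
            /\ coef (bilin nunder a b) =1 coef (bilin nunder a' b')),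
         coef (bilin nover (bilin nover a b) c) =1 coef (bilin nover a (bilin nover b c)),
         coef (bilin nunder (bilin nunder a b) c) =1 coef (bilin nunder a (bilin nunder b c))
       & coef (bilin nunder (bilin nover a b) c) =1 coef (bilin nover a (bilin nunder b c))])
  /\
  (* (ii), name extended linearly is an isomorphism of associative L-algebras
     (+)_{n>=1} K Y_n --> (+)_{n>=1} K \hat N^n *)
  (forall a a' b : seq (tree * K),
     (forall p, p \in a -> 0 < internal p.1) -> (forall p, p \in a' -> 0 < internal p.1) ->
     (forall p, p \in b -> 0 < internal p.1) ->
     [/\ (forall p, p \in linmap name a -> hatNpos p.1),
         (coef a =1 coef a' <-> coef (linmap name a) =1 coef (linmap name a')),
         coef (linmap name (bilin tover a b))
           =1 coef (bilin nover (linmap name a) (linmap name b))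
       & coef (linmap name (bilin tunder a b))
           =1 coef (bilin nunder (linmap name a) (linmap name b))])
  /\
  (forall c : seq (seq nat * K), (forall p, p \in c -> hatNpos p.1) ->
     exists a : seq (tree * K), (forall p, p \in a -> 0 < internal p.1)
       /\ coef (linmap name a) =1 coef c).
Proof.
split.
  move=> n m v w hn hm /hatN_nm [pi [hpi hv]] /hatN_nm [tau [htau hw]].
  have Mv : M v = fk 0 v by apply: M_f; exists pi.
  have Mw : M w = fk 0 w by apply: M_f; exists tau.
  have posw : all (fun x => 0 < x) w by rewrite -hw pos_nm.
  have sv : size v = n by rewrite -hv size_nm.
  have sw : size w = m by rewrite -hw size_nm.
  split.
  - by apply/hatN_nm; exists (tover pi tau); rewrite internal_tover nm_tover hpi htau hv hw.
  - by apply/hatN_nm; exists (tunder pi tau); rewrite internal_tunder nm_tunder hpi htau hv hw.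
  - rewrite M_f; last by exists (tover pi tau); rewrite nm_tover hv hw.
    by rewrite /nover fk_cat add0n; have := fk_tri (size v) 0 posw; rewrite addn0 => ->; rewrite Mv Mw.
  - rewrite M_f; last by exists (tunder pi tau); rewrite nm_tunder hv hw.
    have hv0 : 0 < size v by rewrite sv.
    rewrite /nunder fk_cat add0n; have := fk_shift 0 hv0 posw; rewrite addn0 sw => ->; rewrite Mv.
    by case: ifP => _; rewrite ?mulr0 // mulrC.
split.
  by move=> pi tau _ _; rewrite !name_nm nm_tover nm_tunder.
split.
  move=> u v w hu hv hw.
  have [pw _] := hatNpos_props hw; have [_ sv] := hatNpos_props hv.
  by split; [exact: nover_assoc | exact: nunder_assoc | exact: mixed_assoc].
split.
  move=> a a' b b' c ha ha' hb hb' hc; split.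
    split=> p /allpairsPdep [x [y [hx hy ->]]] /=.
      exact: hatNpos_nover (ha _ hx) (hb _ hy).
    exact: hatNpos_nunder (ha _ hx) (hb _ hy).
  split.
  - by move=> Ea Eb; split; apply: coef_bilin_wd.
  - apply: coef_assoc => p q w hp hq hw.
    by rewrite nover_assoc //; case: (hatNpos_props (hc _ hw)).
  - by apply: coef_assoc => p q w hp hq hw; rewrite nunder_assoc.
  - apply: coef_assoc => p q w hp hq hw.
    rewrite mixed_assoc //; first by case: (hatNpos_props (hc _ hw)).
    by case: (hatNpos_props (hb _ hq)).
split.
  move=> a a' b ha ha' hb; split.
  - move=> p /mapP [x hx ->] /=; apply/hatNpos_tree; exists x.1.
    by rewrite name_nm; split=> //; apply: ha.
  - split=> E.
      move=> y; rewrite !coefLE !sum_linmap.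
      exact: (coef_pair (fun t => ((name t == y)%:R)%R) E).
    move=> t; rewrite !coefLE.
    have := E (name t); rewrite !coefLE !sum_linmap /=.
    have inj : forall t', (t' == t) = (name t' == name t).
      by move=> t'; rewrite !name_nm (inj_eq nm_inj).
    have e : forall c : seq (tree * K), (\sum_(p <- c) p.2 * (p.1 == t)%:R = \sum_(p <- c) p.2 * (name p.1 == name t)%:R)%R.
      by move=> c; apply: eq_bigr => p _; rewrite inj.
    by rewrite !e.
  - move=> x; rewrite !coefLE sum_linmap !sum_bilin sum_linmap.
    apply: eq_bigr => p _; rewrite sum_linmap; apply: eq_bigr => q _ /=.
    by rewrite !name_nm nm_tover.
  - move=> x; rewrite !coefLE sum_linmap !sum_bilin sum_linmap.
    apply: eq_bigr => p _; rewrite sum_linmap; apply: eq_bigr => q _ /=.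
    by rewrite !name_nm nm_tunder.
elim=> [|p c IH] hc.
  by exists [::].
have hc' : forall q, q \in c -> hatNpos q.1 by move=> q hq; apply: hc; rewrite inE hq orbT.
have [a [ha Ea]] := IH hc'.
have /hatNpos_tree [t [ht hn]] := hc p (mem_head _ _).
exists ((t, p.2) :: a); split.
  by move=> q; rewrite inE => /orP[/eqP ->|/ha].
move=> x; rewrite !coefLE /= !big_cons -!coefLE Ea name_nm hn. by [] .
Qed.
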